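(* Fix an integer $\ell\ge1$. For real $k\ge 0$ let $F_k(p)=(1-p)^{-k}\sum_{j=1}^{\ell}\binom{\ell}{j}\frac{1}{1-(1-2p)^j}$ for $p\in(0,1)$. Then, as $k\to\infty$, \[ \min_{p\in(0,1)}F_k(p)=(1+o(1))\,2^\ell e\,(bk+a), \] and also $\min_{x>0}e^x\left(\frac{bk}{x}+a\right)=(1+o(1))\,e\,(bk+a)$.
   Context: $s(\ell)=\sum_{j=1}^\ell\binom{\ell}{j}\frac1j$, $a=\frac12-\frac{1+s(\ell)}{2^{\ell+1}}$, $b=\frac{s(\ell)}{2^{\ell+1}}$. For $k=m\ell$, $F_k(p)$ is the expected number of iterations of the (1+1) EA with mutation rate $p$ on BlockLeadingOnes with block length $\ell$ to go from the first moment the fitness equals $m$ to the first moment it exceeds $m$ (this may be $0$). *)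

(* Defs.v *)
From HB Require Import structures.
From mathcomp Require Import all_boot all_order all_algebra.
From mathcomp Require Import all_classical all_reals all_analysis.
Set Implicit Arguments. Unset Strict Implicit. Unset Printing Implicit Defensive.
Import Order.TTheory GRing.Theory Num.Theory.
Import numFieldNormedType.Exports.
Local Open Scope classical_set_scope.
Local Open Scope ring_scope.

Section Defs.
Variable R : realType.

Definition s_coef (l : nat) : R :=
  \sum_(1 <= j < l.+1) ('C(l, j)%:R / j%:R).

Definition a_coef (l : nat) : R := 2^-1 - (1 + s_coef l) / 2 ^+ l.+1.

Definition b_coef (l : nat) : R := s_coef l / 2 ^+ l.+1.

Definition Fk (l : nat) (k p : R) : R :=
  powR (1 - p) (- k) * \sum_(1 <= j < l.+1) ('C(l, j)%:R / (1 - (1 - 2 * p) ^+ j)).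

Definition minFk (l : nat) (k : R) : R :=
  inf [set y | exists p : R, [/\ 0 < p, p < 1 & y = Fk l k p]].

Definition minG (l : nat) (k : R) : R :=
  inf [set y | exists x : R, 0 < x /\ y = expR x * (b_coef l * k / x + a_coef l)].

End Defs.

(* Main.v *)
Require Import Defs.
From HB Require Import structures.
From mathcomp Require Import all_boot all_order all_algebra.
From mathcomp Require Import all_classical all_reals all_analysis.
From mathcomp.algebra_tactics Require Import ring lra.
Import Order.TTheory GRing.Theory Num.Theory.
Import numFieldNormedType.Exports.
Local Open Scope classical_set_scope.
Local Open Scope ring_scope.

Lemma bern (R : realDomainType) (x : R) n : -1 <= x -> 1 + n%:R * x <= (1 + x) ^+ n.
Proof.
move=> hx; elim: n => [|n IH]; first by rewrite mul0r addr0 expr0.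
rewrite exprS.
have h1 : 0 <= 1 + x by lra.
have := ler_wpM2l h1 IH.
have hn : 0 <= (n%:R : R) by rewrite ler0n.
rewrite -natr1.
nra.
Qed.

Lemma geom (R : comPzRingType) (q : R) j : 1 - q ^+ j = (1 - q) * \sum_(i < j) q ^+ i.
Proof.
rewrite -{1}(expr1n R j) subrXX; congr (_ * _).
by apply: eq_bigr => i _; rewrite expr1n mul1r.
Qed.

Lemma term_le (R : realFieldType) (p : R) j : 0 < p -> p < 1 -> (0 < j)%N ->
  0 < 1 - (1 - 2 * p) ^+ j <= 2 * j%:R * p.
Proof.
move=> p0 p1 j0.
have hq : `|1 - 2 * p| < 1 by rewrite ltr_norml; apply/andP; split; lra.
apply/andP; split.
  rewrite subr_gt0; apply: (le_lt_trans (ler_norm _)); rewrite normrX.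
  rewrite exprn_ilt1 ?normr_ge0 //; by rewrite -lt0n.
rewrite geom.
have -> : 1 - (1 - 2 * p) = 2 * p by ring.
have -> : 2 * j%:R * p = (2 * p) * j%:R by ring.
rewrite ler_wpM2l //; first lra.
have -> : (j%:R : R) = \sum_(i < j) 1.
  by rewrite sumr_const card_ord.
apply: ler_sum => i _.
apply: (le_trans (ler_norm _)); rewrite normrX.
by rewrite exprn_ile1 ?normr_ge0 // ltW.
Qed.

Lemma term_ge (R : realFieldType) (p : R) j l : 0 <= p -> 2 * l%:R * p <= 1 -> (j <= l)%N ->
  2 * j%:R * p * (1 - 2 * l%:R * p) <= 1 - (1 - 2 * p) ^+ j.
Proof.
move=> p0 pl jl.
rewrite geom.
have -> : 1 - (1 - 2 * p) = 2 * p by ring.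
have -> : 2 * j%:R * p * (1 - 2 * l%:R * p) = (2 * p) * (j%:R * (1 - 2 * l%:R * p)) by ring.
have h2p : 0 <= 2 * p by lra.
rewrite ler_wpM2l //.
have -> : (j%:R : R) * (1 - 2 * l%:R * p) = \sum_(i < j) (1 - 2 * l%:R * p).
  by rewrite sumr_const card_ord mulr_natl.
apply: ler_sum => i _.
have hl : (0 <= l%:R :> R) by rewrite ler0n.
have hi : (i%:R <= l%:R :> R).
  by rewrite ler_nat; apply: leq_trans jl; apply: ltnW.
have hl1 : (1 <= l%:R :> R) by rewrite ler1n; apply: leq_trans jl; exact: leq_ltn_trans (leq0n i) (ltn_ord i).
have hpl : p <= l%:R * p by rewrite ler_peMl.
have hb : -1 <= - (2 * p) by lra.
have := @bern _ (- (2 * p)) i hb.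
have : i%:R * p <= l%:R * p :> R by rewrite ler_wpM2r.
nra.
Qed.

Lemma inv_cvg0 (R : realType) : (fun k : R => k^-1) @ +oo --> 0.
Proof.
have := @gtr0_cvgV0 R R (@pinfty_nbhs R) _ id.
move=> H; apply/H; last exact: cvg_id.
exact: nbhs_pinfty_gt.
Qed.

Lemma cvg_h (R : realType) (a b : R) : b != 0 ->
  (fun k : R => b / (b + a * k^-1)) @ +oo --> (1:R).
Proof.
move=> b0.
suff H : (fun k : R => b / (b + a * k^-1)) @ +oo --> b / (b + a * 0).
  by rewrite mulr0 addr0 divff in H.
apply: cvgM; first exact: cvg_cst.
apply: cvgV; first by rewrite mulr0 addr0.
apply: cvgD; first exact: cvg_cst.
apply: cvgM; first exact: cvg_cst.
exact: inv_cvg0.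
Qed.

Lemma cvg_g (R : realType) (c : R) :
  (fun k : R => expR (k^-1 / (1 - k^-1)) / (1 - c * k^-1)) @ +oo --> (1:R).
Proof.
suff H : (fun k : R => expR (k^-1 / (1 - k^-1)) / (1 - c * k^-1)) @ +oo --> expR (0 / (1 - 0)) / (1 - c * 0).
  by rewrite mul0r expR0 mulr0 subr0 invr1 mulr1 in H.
apply: cvgM.
  apply: continuous_cvg; first exact: continuous_expR.
  apply: cvgM; first exact: inv_cvg0.
  apply: cvgV; first by rewrite subr0 oner_neq0.
  apply: cvgB; first exact: cvg_cst.
  exact: inv_cvg0.
apply: cvgV; first by rewrite mulr0 subr0 oner_neq0.
apply: cvgB; first exact: cvg_cst.
apply: cvgM; first exact: cvg_cst.
exact: inv_cvg0.
Qed.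

Section Main.
Variable R : realType.

Lemma s_gt0 l : (1 <= l)%N -> 0 < s_coef R l.
Proof.
move=> hl; rewrite /s_coef big_ltn // bin1 divr1.
apply: ltr_wpDr; last by rewrite ltr0n.
apply: sumr_ge0 => i _; apply: divr_ge0; exact: ler0n.
Qed.

Lemma s_le l : s_coef R l + 1 <= 2 ^+ l.
Proof.
have H : (2 ^ l)%N = \sum_(i < l.+1) 'C(l, i).
  rewrite -[2%N]/(1+1)%N expnDn; apply: eq_bigr => i _; by rewrite !exp1n !muln1.
have -> : (2 : R) ^+ l = ((2 ^ l)%N)%:R by rewrite natrX.
rewrite H natr_sum -(big_mkord xpredT (fun i => ('C(l, i))%:R)) big_ltn // bin0 addrC lerD2l.
rewrite /s_coef [X in X <= _]big_nat_cond [X in _ <= X]big_nat_cond.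
apply: ler_sum => j /andP[/andP[j1 _] _].
rewrite ler_pdivrMr ?ltr0n //; apply: ler_peMr; first exact: ler0n.
by rewrite ler1n.
Qed.

Lemma a_ge0 l : 0 <= a_coef R l.
Proof.
rewrite /a_coef subr_ge0 exprS ler_pdivrMr; last by apply: mulr_gt0 => //; apply: exprn_gt0.
have := s_le l; rewrite mulrA mulVf ?mul1r //; lra.
Qed.

Lemma expR_ge (x : R) : expR 1 * x <= expR x.
Proof.
have -> : expR x = expR 1 * expR (x - 1) by rewrite -expRD; congr expR; ring.
rewrite ler_wpM2l ?expR_ge0 //; have := expR_ge1Dx (x - 1); lra.
Qed.

Lemma ln_le (x : R) : 0 < x -> ln x <= x - 1.
Proof. move=> x0; have := expR_ge1Dx (ln x); rewrite lnK ?posrE //; lra. Qed.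

Lemma Fk_lower l (k p : R) : 0 < k -> 0 < p -> p < 1 ->
  expR 1 * k * (s_coef R l / 2) <= Fk l k p.
Proof.
move=> k0 p0 p1; rewrite /Fk.
have hq : 0 < 1 - p by lra.
have E : powR (1 - p) (- k) = expR (- k * ln (1 - p)) by rewrite /powR gt_eqF.
have Hln : ln (1 - p) <= - p by have := @ln_le (1 - p) hq; lra.
have HE : expR (k * p) <= powR (1 - p) (- k).
  rewrite E ler_expR; have : 0 <= k * (- p - ln (1 - p)) by apply: mulr_ge0; lra.
  lra.
have HS : s_coef R l / (2 * p) <= \sum_(1 <= j < l.+1) ('C(l, j)%:R / (1 - (1 - 2 * p) ^+ j)).
  rewrite /s_coef mulr_suml [X in X <= _]big_nat_cond [X in _ <= X]big_nat_cond.
  apply: ler_sum => j /andP[/andP[j1 _] _].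
  have /andP[t0 tle] := @term_le _ p j p0 p1 j1.
  have hj : (0 < j%:R :> R) by rewrite ltr0n.
  rewrite -mulrA -invfM ler_wpM2l ?ler0n // lef_pV2 ?posrE //.
    by apply: (le_trans tle); rewrite le_eqVlt; apply/orP; left; apply/eqP; ring.
  by apply: mulr_gt0 => //; lra.
have s0 : 0 <= s_coef R l / (2 * p) by apply: divr_ge0; [apply: sumr_ge0 => i _; apply: divr_ge0; exact: ler0n | lra].
apply: le_trans (ler_pM (expR_ge0 _) s0 HE HS).
apply: le_trans (ler_wpM2r s0 (expR_ge (k * p))).
rewrite le_eqVlt; apply/orP; left; apply/eqP; field; lra.
Qed.

Lemma S_ge0 l (p : R) : 0 < p -> p < 1 ->
  0 <= \sum_(1 <= j < l.+1) ('C(l, j)%:R / (1 - (1 - 2 * p) ^+ j)).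
Proof.
move=> p0 p1; rewrite big_nat_cond; apply: sumr_ge0 => j /andP[/andP[j1 _] _].
have /andP[t0 _] := @term_le _ p j p0 p1 j1.
by apply: divr_ge0; [exact: ler0n | exact: ltW].
Qed.

Lemma Fk_upper l (k : R) : (1 <= l)%N -> 2 * l%:R < k ->
  Fk l k k^-1 <= expR (k * ((1 - k^-1)^-1 - 1)) *
     (s_coef R l / (2 * k^-1 * (1 - 2 * l%:R * k^-1))).
Proof.
move=> hl hk.
have l1 : (1 <= l%:R :> R) by rewrite ler1n.
have k0 : 0 < k by lra.
rewrite /Fk.
set p := k^-1.
have p0 : 0 < p by rewrite /p invr_gt0.
have hlp : 2 * l%:R * p < 1.
  by rewrite /p ltr_pdivrMr // mul1r.
have p1 : p < 1.
  have : p <= l%:R * p by rewrite ler_peMl // ltW.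
  lra.
have hq : 0 < 1 - p by lra.
have E : powR (1 - p) (- k) = expR (- k * ln (1 - p)) by rewrite /powR gt_eqF.
have Hln : - ln (1 - p) <= (1 - p)^-1 - 1.
  rewrite -lnV ?posrE //; apply: ln_le; by rewrite invr_gt0.
have HE : powR (1 - p) (- k) <= expR (k * ((1 - p)^-1 - 1)).
  rewrite E ler_expR; have : 0 <= k * ((1 - p)^-1 - 1 + ln (1 - p)) by apply: mulr_ge0; lra.
  lra.
have HS : \sum_(1 <= j < l.+1) ('C(l, j)%:R / (1 - (1 - 2 * p) ^+ j)) <=
    s_coef R l / (2 * p * (1 - 2 * l%:R * p)).
  rewrite /s_coef mulr_suml [X in X <= _]big_nat_cond [X in _ <= X]big_nat_cond.
  apply: ler_sum => j /andP[/andP[j1 jl] _].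
  have tg := @term_ge _ p j l (ltW p0) (ltW hlp) jl.
  have /andP[t0 _] := @term_le _ p j p0 p1 j1.
  have hj : (0 < j%:R :> R) by rewrite ltr0n.
  rewrite -[X in _ <= X]mulrA -invfM ler_wpM2l ?ler0n // lef_pV2 ?posrE //.
    by apply: (le_trans _ tg); rewrite le_eqVlt; apply/orP; left; apply/eqP; ring.
  by apply: mulr_gt0 => //; apply: mulr_gt0; lra.
apply: ler_pM HE HS; [exact: powR_ge0 | exact: S_ge0].
Qed.

Lemma inf_between (E : set R) lo hi : (forall y, E y -> lo <= y) ->
  (exists2 y, E y & y <= hi) -> lo <= inf E <= hi.
Proof.
move=> lb [y Ey yh]; apply/andP; split.
  by apply: lb_le_inf; [exists y | exact: lb].
apply: le_trans yh; apply: (ge_inf _ Ey); by exists lo.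
Qed.

Lemma minFk_bounds l (k : R) : (1 <= l)%N -> 2 * l%:R < k ->
  expR 1 * k * (s_coef R l / 2) <= minFk l k <=
  expR (k * ((1 - k^-1)^-1 - 1)) * (s_coef R l / (2 * k^-1 * (1 - 2 * l%:R * k^-1))).
Proof.
move=> hl hk.
have l1 : (1 <= l%:R :> R) by rewrite ler1n.
have k0 : 0 < k by lra.
have p0 : 0 < k^-1 by rewrite invr_gt0.
have p1 : k^-1 < 1 by rewrite invf_lt1 //; lra.
apply: inf_between.
  by move=> y [p [q0 q1 ->]]; apply: Fk_lower.
exists (Fk l k k^-1); first by exists k^-1.
exact: Fk_upper.
Qed.

Lemma minG_bounds l (k : R) : 0 < k ->
  expR 1 * (b_coef R l * k) <= minG l k <= expR 1 * (b_coef R l * k + a_coef R l).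
Proof.
move=> k0.
have b0 : 0 <= b_coef R l.
  rewrite /b_coef; apply: divr_ge0; last by apply: exprn_ge0.
  by apply: sumr_ge0 => i _; apply: divr_ge0; exact: ler0n.
have a0 := a_ge0 l.
apply: inf_between.
  move=> y [x [x0 ->]].
  have bk0 : 0 <= b_coef R l * k / x by apply: divr_ge0; [apply: mulr_ge0; lra | lra].
  apply: (@le_trans _ _ (expR x * (b_coef R l * k / x))); last first.
    by rewrite ler_wpM2l ?expR_ge0 //; lra.
  apply: le_trans (ler_wpM2r bk0 (expR_ge x)).
  rewrite le_eqVlt; apply/orP; left; apply/eqP; field; lra.
exists (expR 1 * (b_coef R l * k / 1 + a_coef R l)); first by exists 1.
by rewrite divr1.
Qed.

Lemma ratio1 l (k : R) : (1 <= l)%N -> 2 * l%:R < k ->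
  b_coef R l / (b_coef R l + a_coef R l * k^-1) <=
  minFk l k / (2 ^+ l * expR 1 * (b_coef R l * k + a_coef R l)) <=
  expR (k^-1 / (1 - k^-1)) / (1 - (2 * l%:R) * k^-1) * (b_coef R l / (b_coef R l + a_coef R l * k^-1)).
Proof.
move=> hl hk.
have l1 : (1 <= l%:R :> R) by rewrite ler1n.
have k0 : 0 < k by lra.
have s0 := @s_gt0 l hl.
have t0 : 0 < (2:R) ^+ l by apply: exprn_gt0.
have b0 : 0 < b_coef R l by rewrite /b_coef divr_gt0 // exprn_gt0.
have a0 := a_ge0 l.
have e0 := expR_gt0 (1:R).
have D0 : 0 < 2 ^+ l * expR 1 * (b_coef R l * k + a_coef R l).
  apply: mulr_gt0; first exact: mulr_gt0.
  have : 0 < b_coef R l * k by apply: mulr_gt0.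
  lra.
have p0 : 0 < k^-1 by rewrite invr_gt0.
have hlp : 2 * l%:R * k^-1 < 1 by rewrite ltr_pdivrMr // mul1r.
have p1 : k^-1 < 1.
  have : k^-1 <= l%:R * k^-1 by rewrite ler_peMl // ltW.
  lra.
have [lo hi] := andP (@minFk_bounds l k hl hk).
have Di : 0 <= (2 ^+ l * expR 1 * (b_coef R l * k + a_coef R l))^-1 by rewrite invr_ge0 ltW.
have ak0 : 0 <= a_coef R l * k^-1 by apply: mulr_ge0 => //; apply: ltW.
have bk0 : 0 < b_coef R l * k by apply: mulr_gt0.
have bd0 : 0 < b_coef R l + a_coef R l * k^-1 by lra.
have hsk : 0 < s_coef R l * k by apply: mulr_gt0.
have ha2 : 0 <= a_coef R l * (2 * 2 ^+ l) by apply: mulr_ge0 => //; lra.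
have q0 : 0 < 1 - k^-1 by lra.
have r0 : 0 < 1 - 2 * l%:R * k^-1 by lra.
apply/andP; split.
  have -> : b_coef R l / (b_coef R l + a_coef R l * k^-1) =
      expR 1 * k * (s_coef R l / 2) * (2 ^+ l * expR 1 * (b_coef R l * k + a_coef R l))^-1.
    move: b0 bk0 ak0 D0 bd0; rewrite /b_coef exprS => b0 bk0 ak0 D0 bd0.
    field; repeat (apply/andP; split); apply: lt0r_neq0; try lra.
  by apply: ler_wpM2r.
have <- : expR (k * ((1 - k^-1)^-1 - 1)) * (s_coef R l / (2 * k^-1 * (1 - 2 * l%:R * k^-1))) *
   (2 ^+ l * expR 1 * (b_coef R l * k + a_coef R l))^-1 =
   expR (k^-1 / (1 - k^-1)) / (1 - (2 * l%:R) * k^-1) * (b_coef R l / (b_coef R l + a_coef R l * k^-1)).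
  have -> : expR (k * ((1 - k^-1)^-1 - 1)) = expR 1 * expR (k^-1 / (1 - k^-1)).
    rewrite -expRD; congr expR; field; repeat (apply/andP; split); apply: lt0r_neq0; try lra.
  have ee := expR_gt0 (k^-1 / (1 - k^-1)).
  move: b0 bk0 ak0 D0 bd0; rewrite /b_coef exprS => b0 bk0 ak0 D0 bd0.
  field; repeat (apply/andP; split); apply: lt0r_neq0; try lra.
by apply: ler_wpM2r.
Qed.

Lemma ratio2 l (k : R) : (1 <= l)%N -> 0 < k ->
  b_coef R l / (b_coef R l + a_coef R l * k^-1) <=
  minG l k / (expR 1 * (b_coef R l * k + a_coef R l)) <= 1.
Proof.
move=> hl k0.
have s0 := @s_gt0 l hl.
have b0 : 0 < b_coef R l by rewrite /b_coef divr_gt0 // exprn_gt0.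
have a0 := a_ge0 l.
have e0 := expR_gt0 (1:R).
have bk0 : 0 < b_coef R l * k by apply: mulr_gt0.
have D0 : 0 < expR 1 * (b_coef R l * k + a_coef R l) by apply: mulr_gt0 => //; lra.
have Di : 0 <= (expR 1 * (b_coef R l * k + a_coef R l))^-1 by rewrite invr_ge0 ltW.
have p0 : 0 < k^-1 by rewrite invr_gt0.
have ak0 : 0 <= a_coef R l * k^-1 by apply: mulr_ge0 => //; apply: ltW.
have bd0 : 0 < b_coef R l + a_coef R l * k^-1 by lra.
have [lo hi] := andP (@minG_bounds l k k0).
apply/andP; split.
  have -> : b_coef R l / (b_coef R l + a_coef R l * k^-1) =
      expR 1 * (b_coef R l * k) * (expR 1 * (b_coef R l * k + a_coef R l))^-1.
    field; repeat (apply/andP; split); apply: lt0r_neq0; try lra.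
  by apply: ler_wpM2r.
rewrite ler_pdivrMr // mul1r //.
Qed.

End Main.

Theorem mainTheorem17 (R : realType) (l : nat) (hl : (1 <= l)%N) :
  (fun k : R => minFk (R:=R) l k / (2 ^+ l * expR 1 * (b_coef R l * k + a_coef R l)))
     @ +oo --> (1 : R)
  /\
  (fun k : R => minG (R:=R) l k / (expR 1 * (b_coef R l * k + a_coef R l)))
     @ +oo --> (1 : R).
Proof.
have s0 := @s_gt0 R l hl.
have b0 : 0 < b_coef R l by rewrite /b_coef divr_gt0 // exprn_gt0.
have hb : b_coef R l != 0 by apply: lt0r_neq0.
split.
  apply: (@squeeze_cvgr _ _ _ _ (fun k => b_coef R l / (b_coef R l + a_coef R l * k^-1))
    (fun k => expR (k^-1 / (1 - k^-1)) / (1 - (2 * l%:R) * k^-1) *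
       (b_coef R l / (b_coef R l + a_coef R l * k^-1))) _).
  - near=> k.
    have hk : 2 * l%:R < k by near: k; apply: nbhs_pinfty_gt; exact: num_real.
    exact: ratio1.
  - exact: cvg_h.
  - have := cvgM (@cvg_g R (2 * l%:R)) (@cvg_h R (a_coef R l) _ hb); rewrite mulr1; exact.
apply: (@squeeze_cvgr _ _ _ _ (fun k => b_coef R l / (b_coef R l + a_coef R l * k^-1))
    (fun _ => 1) _).
- near=> k.
  have hk : 0 < k by near: k; apply: nbhs_pinfty_gt; exact: num_real.
  exact: ratio2.
- exact: cvg_h.
- exact: cvg_cst.
Unshelve. all: by end_near.
Qed.
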